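(* Let $A\in\mathbb{R}^{n\times m}$ have distinct columns with $a_1=0$, let $c\in\mathbb{R}^m$ and $f=\mathrm{Sig}(A,c)$. Then $$\sup\{\gamma\in\mathbb{R} : c-\gamma e_1\in C_{\mathrm{SAGE}}(A)\}=\inf\{c^\top v : v\in C_{\mathrm{SAGE}}(A)^\dagger,\ v_1=1\},$$ i.e. strong duality holds between the primal and dual formulations of $f_{\mathsf{SAGE}}$ (with the conventions $\sup\emptyset=-\infty$).
   Context: Let $A\in\mathbb{R}^{n\times m}$ have distinct columns $a_1,\dots,a_m$. For $c\in\mathbb{R}^m$, $\mathrm{Sig}(A,c)$ denotes the function $x\mapsto\sum_{i=1}^m c_i\exp(a_i^\top x)$ on $\mathbb{R}^n$. $C_{\mathrm{NNS}}(A)=\{c\in\mathbb{R}^m:\mathrm{Sig}(A,c)(x)\ge 0\ \forall x\in\mathbb{R}^n\}$. For $k\in[m]$, the $k$-th AGE cone is $C_{\mathrm{AGE}}(A,k)=\{c\in C_{\mathrm{NNS}}(A): c_i\ge 0\ \forall i\ne k\}$, and the SAGE cone is the Minkowski sum $C_{\mathrm{SAGE}}(A)=\sum_{k=1}^m C_{\mathrm{AGE}}(A,k)$. For a convex cone $K\subset\mathbb{R}^m$, $K^\dagger=\{y: y^\top x\ge 0\ \forall x\in K\}$. $e_1$ is the first standard basis vector. *)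

(* Defs.v *)
From Stdlib Require Import Reals.
Open Scope R_scope.

Fixpoint sumR (k : nat) (f : nat -> R) : R :=
  match k with
  | O => 0
  | S k' => sumR k' f + f k'
  end.

(* Conventions: a matrix A in R^{n x m} is a function A : nat -> nat -> R,
   with entry (row j, column i) = A j i, only j < n, i < m relevant.
   Vectors in R^m / R^n are functions nat -> R (only the first m / n
   coordinates are relevant).  Indices are 0-based, so the paper's
   "1"st index is 0. *)

Definition Sig (n m : nat) (A : nat -> nat -> R) (c : nat -> R) (x : nat -> R) : R :=
  sumR m (fun i => c i * exp (sumR n (fun j => A j i * x j))).

Definition dot (m : nat) (u v : nat -> R) : R := sumR m (fun i => u i * v i).

Definition C_NNS (n m : nat) (A : nat -> nat -> R) (c : nat -> R) : Prop :=
  forall x : nat -> R, 0 <= Sig n m A c x.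

Definition C_AGE (n m : nat) (A : nat -> nat -> R) (k : nat) (c : nat -> R) : Prop :=
  C_NNS n m A c /\ (forall i, (i < m)%nat -> i <> k -> 0 <= c i).

Definition C_SAGE (n m : nat) (A : nat -> nat -> R) (c : nat -> R) : Prop :=
  exists cs : nat -> nat -> R,
    (forall k, (k < m)%nat -> C_AGE n m A k (cs k)) /\
    (forall i, (i < m)%nat -> c i = sumR m (fun k => cs k i)).

Definition dual_cone (m : nat) (K : (nat -> R) -> Prop) (y : nat -> R) : Prop :=
  forall x, K x -> 0 <= dot m y x.

Definition e1 (i : nat) : R := if Nat.eqb i 0 then 1 else 0.

Definition distinct_columns (n m : nat) (A : nat -> nat -> R) : Prop :=
  forall i k, (i < m)%nat -> (k < m)%nat -> i <> k ->
    exists j, (j < n)%nat /\ A j i <> A j k.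

(* Extended reals, for sup/inf with sup(empty) = -oo, inf(empty) = +oo. *)
Inductive ER : Type := Fin (r : R) | PInf | MInf.

Definition ERle (x y : ER) : Prop :=
  match x, y with
  | MInf, _ => True
  | _, PInf => True
  | Fin a, Fin b => a <= b
  | _, _ => False
  end.

Definition is_esup (S : R -> Prop) (s : ER) : Prop :=
  (forall x, S x -> ERle (Fin x) s) /\
  (forall u, (forall x, S x -> ERle (Fin x) u) -> ERle s u).

Definition is_einf (S : R -> Prop) (s : ER) : Prop :=
  (forall x, S x -> ERle s (Fin x)) /\
  (forall u, (forall x, S x -> ERle u (Fin x)) -> ERle u s).

(* Main.v *)
Require Import Defs.
From Stdlib Require Import Reals Lra Lia Psatz ClassicalEpsilon Classical List.
Open Scope R_scope.

Lemma sumR_ext k f g : (forall i, (i < k)%nat -> f i = g i) -> sumR k f = sumR k g.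
Proof. induction k; simpl; intros H; auto. rewrite IHk by (intros; apply H; lia). rewrite H by lia. auto. Qed.

Lemma sumR_le k f g : (forall i, (i < k)%nat -> f i <= g i) -> sumR k f <= sumR k g.
Proof. induction k; simpl; intros H; [lra|]. assert (H1 := H k ltac:(lia)). assert (sumR k f <= sumR k g) by (apply IHk; intros; apply H; lia). lra. Qed.

Lemma sumR_zero k : sumR k (fun _ => 0) = 0.
Proof. induction k; simpl; lra. Qed.

Lemma sumR_nonneg k f : (forall i, (i < k)%nat -> 0 <= f i) -> 0 <= sumR k f.
Proof. intros H. rewrite <- (sumR_zero k). apply sumR_le; auto. Qed.

Lemma sumR_plus k f g : sumR k (fun i => f i + g i) = sumR k f + sumR k g.
Proof. induction k; simpl; [lra|]. rewrite IHk. lra. Qed.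

Lemma sumR_scal k c f : sumR k (fun i => c * f i) = c * sumR k f.
Proof. induction k; simpl; [lra|]. rewrite IHk. lra. Qed.

Lemma sumR_const k c : sumR k (fun _ => c) = INR k * c.
Proof. induction k; simpl sumR; [simpl; lra|]. rewrite IHk, S_INR. lra. Qed.

Lemma sumR_swap a b (f : nat -> nat -> R) :
  sumR a (fun i => sumR b (fun j => f i j)) = sumR b (fun j => sumR a (fun i => f i j)).
Proof. induction a; simpl. - rewrite sumR_zero; auto. - rewrite IHa, <- sumR_plus. auto. Qed.

Lemma sumR_ge_term k f j : (forall i, (i < k)%nat -> 0 <= f i) -> (j < k)%nat -> f j <= sumR k f.
Proof. induction k; intros H Hj; [lia|]. simpl. destruct (Nat.eq_dec j k).
 - subst. assert (0 <= sumR k f) by (apply sumR_nonneg; intros; apply H; lia). lra.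
 - assert (f j <= sumR k f) by (apply IHk; [intros; apply H; lia| lia]). assert (0 <= f k) by (apply H; lia). lra. Qed.

Lemma sumR_split k f j : (j < k)%nat ->
  sumR k f = f j + sumR k (fun i => if Nat.eqb i j then 0 else f i).
Proof. induction k; intros Hj; [lia|]. simpl. destruct (Nat.eq_dec j k).
 - subst. rewrite Nat.eqb_refl. rewrite (sumR_ext k (fun i => if Nat.eqb i k then 0 else f i) f). lra.
   intros i Hi. destruct (Nat.eqb_spec i k); [lia|auto].
 - rewrite (IHk ltac:(lia)). destruct (Nat.eqb_spec k j); [lia|]. lra. Qed.

Lemma sumR_single k f j : (j < k)%nat -> (forall i, (i < k)%nat -> i <> j -> f i = 0) -> sumR k f = f j.
Proof. intros Hj H. rewrite (sumR_split k f j Hj). rewrite (sumR_ext k _ (fun _ => 0)). rewrite sumR_zero; lra.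
 intros i Hi. destruct (Nat.eqb_spec i j); auto. Qed.

Lemma sumR_modif k f j d : (j < k)%nat ->
  sumR k (fun i => if Nat.eqb i j then f i + d else f i) = sumR k f + d.
Proof. intros Hj. rewrite (sumR_split _ _ j Hj), (sumR_split k f j Hj). rewrite Nat.eqb_refl.
 rewrite (sumR_ext k (fun i => if Nat.eqb i j then 0 else if Nat.eqb i j then f i + d else f i)
   (fun i => if Nat.eqb i j then 0 else f i)). lra. intros i _. destruct (Nat.eqb i j); auto. Qed.

Lemma CV_const c : Un_cv (fun _ => c) c.
Proof. intros e He. exists O. intros. unfold Rdist. rewrite Rminus_diag, Rabs_R0. lra. Qed.

Lemma sumR_cv k (f : nat -> nat -> R) g :
  (forall i, (i < k)%nat -> Un_cv (fun l => f l i) (g i)) -> Un_cv (fun l => sumR k (f l)) (sumR k g).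
Proof. induction k; intros H; simpl. - apply CV_const.
 - apply CV_plus. apply IHk; intros; apply H; lia. apply H; lia. Qed.

Lemma abs_le_inv x B : Rabs x <= B -> -B <= x <= B.
Proof. unfold Rabs; destruct (Rcase_abs x); intros; lra. Qed.

Definition SI (psi : nat -> nat) := forall a, (psi a < psi (S a))%nat.

Lemma SI_ge psi : SI psi -> forall a, (a <= psi a)%nat.
Proof. intros H a; induction a; [lia|]. specialize (H a). lia. Qed.

Lemma SI_mono psi : SI psi -> forall a b, (a <= b)%nat -> (psi a <= psi b)%nat.
Proof. intros H a b Hab. induction Hab; [lia|]. specialize (H m). lia. Qed.

Lemma SI_comp psi chi : SI psi -> SI chi -> SI (fun a => psi (chi a)).
Proof. intros H1 H2 a. specialize (H2 a). assert (psi (S (chi a)) <= psi (chi (S a)))%nat by (apply SI_mono; auto).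
 specialize (H1 (chi a)). lia. Qed.

Lemma cv_sub u L psi : SI psi -> Un_cv u L -> Un_cv (fun l => u (psi l)) L.
Proof. intros Hs Hc e He. destruct (Hc e He) as [N HN]. exists N. intros n Hn. apply HN.
 assert (n <= psi n)%nat by (apply SI_ge; auto). lia. Qed.

Fixpoint psi_build (nx : nat -> nat -> nat) (k : nat) : nat :=
  match k with O => nx O O | S k' => nx (S (psi_build nx k')) (S k') end.

Lemma BW1 (u : nat -> R) B : (forall l, Rabs (u l) <= B) ->
  exists psi L, SI psi /\ Un_cv (fun l => u (psi l)) L.
Proof.
  intros HB. destruct (Bolzano_Weierstrass u (fun c => -B <= c <= B) (compact_P3 _ _)) as [L HL].
  { intros l. specialize (HB l). apply abs_le_inv in HB. lra. }
  assert (H : forall N k, exists p, (N <= p)%nat /\ Rabs (u p - L) < / INR (S k)).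
  { intros N k. assert (Hp : 0 < / INR (S k)) by (apply Rinv_0_lt_compat, lt_0_INR; lia).
    destruct (HL (disc L (mkposreal _ Hp)) N) as [p [Hp1 Hp2]].
    - exists (mkposreal _ Hp). intros x Hx; exact Hx.
    - exists p. split; auto. }
  set (nx := fun N k => proj1_sig (constructive_indefinite_description _ (H N k))).
  assert (Hnx : forall N k, (N <= nx N k)%nat /\ Rabs (u (nx N k) - L) < / INR (S k)).
  { intros N k. unfold nx. destruct (constructive_indefinite_description _ (H N k)); simpl; auto. }
  exists (psi_build nx), L. split.
  - intros a. simpl. destruct (Hnx (S (psi_build nx a)) (S a)). lia.
  - assert (Hk : forall k, Rabs (u (psi_build nx k) - L) < / INR (S k)).
    { intros [|k]; simpl; apply Hnx. }
    intros e He. destruct (archimed_cor1 e He) as [N [HN1 HN2]]. exists N. intros n Hn.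
    unfold Rdist. eapply Rlt_trans; [apply Hk|]. eapply Rle_lt_trans; [|apply HN1].
    apply Rinv_le_contravar. apply lt_0_INR; lia. apply le_INR; lia.
Qed.

Lemma BWlist (T : Type) (L : list T) (f : nat -> T -> R) B :
  (forall l t, In t L -> Rabs (f l t) <= B) ->
  exists psi, SI psi /\ forall t, In t L -> exists lim, Un_cv (fun l => f (psi l) t) lim.
Proof.
  induction L as [|t0 L IH]; intros HB.
  - exists (fun a => a). split. intros a; lia. intros t [].
  - destruct IH as [psi [Hpsi Hlim]]. { intros l t Ht. apply HB. right; auto. }
    destruct (BW1 (fun l => f (psi l) t0) B) as [chi [L0 [Hchi Hcv]]].
    { intros l. apply HB. left; auto. }
    exists (fun a => psi (chi a)). split. apply SI_comp; auto.
    intros t [<-|Ht]. + exists L0. exact Hcv.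
    + destruct (Hlim t Ht) as [lim Hl]. exists lim. apply (cv_sub (fun l => f (psi l) t)); auto.
Qed.

Definition ssum (m : nat) (cs : nat -> nat -> R) (i : nat) : R := sumR m (fun k => cs k i).
Definition Adm n m A (cs : nat -> nat -> R) : Prop := forall k, (k < m)%nat -> C_AGE n m A k (cs k).

Lemma Sig_ext n m A c d x : (forall i, (i < m)%nat -> c i = d i) -> Sig n m A c x = Sig n m A d x.
Proof. intros H. unfold Sig. apply sumR_ext. intros i Hi. rewrite H; auto. Qed.

Lemma Sig_plus n m A c d x : Sig n m A (fun i => c i + d i) x = Sig n m A c x + Sig n m A d x.
Proof. unfold Sig. rewrite <- sumR_plus. apply sumR_ext. intros; lra. Qed.

Lemma Sig_scal n m A t c x : Sig n m A (fun i => t * c i) x = t * Sig n m A c x.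
Proof. unfold Sig. rewrite <- sumR_scal. apply sumR_ext. intros; lra. Qed.

Lemma Sig_ssum n m A cs x : Sig n m A (ssum m cs) x = sumR m (fun k => Sig n m A (cs k) x).
Proof. unfold Sig, ssum. rewrite (sumR_swap m m (fun k i => cs k i * exp (sumR n (fun j => A j i * x j)))).
 apply sumR_ext. intros i _. rewrite Rmult_comm, <- sumR_scal. apply sumR_ext. intros; lra. Qed.

Lemma AGE_plus n m A k c d : C_AGE n m A k c -> C_AGE n m A k d -> C_AGE n m A k (fun i => c i + d i).
Proof. intros [H1 H2] [H3 H4]. split. - intros x. rewrite Sig_plus. specialize (H1 x); specialize (H3 x); lra.
 - intros i Hi Hk. specialize (H2 i Hi Hk); specialize (H4 i Hi Hk); lra. Qed.

Lemma AGE_scal n m A k t c : 0 <= t -> C_AGE n m A k c -> C_AGE n m A k (fun i => t * c i).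
Proof. intros Ht [H1 H2]. split. - intros x. rewrite Sig_scal. specialize (H1 x); nra.
 - intros i Hi Hk. specialize (H2 i Hi Hk); nra. Qed.

Lemma AGE_zero n m A k : C_AGE n m A k (fun _ => 0).
Proof. split. - intros x. unfold Sig. rewrite (sumR_ext m _ (fun _ => 0)). rewrite sumR_zero; lra. intros; lra.
 - intros; lra. Qed.

Lemma SAGE_ext n m A c d : (forall i, (i < m)%nat -> c i = d i) -> C_SAGE n m A c -> C_SAGE n m A d.
Proof. intros H [cs [H1 H2]]. exists cs. split; auto. intros i Hi. rewrite <- H; auto. Qed.

Lemma SAGE_Adm n m A cs : Adm n m A cs -> C_SAGE n m A (ssum m cs).
Proof. intros H. exists cs. split; auto. Qed.

Lemma Sig_K n m A c x : C_SAGE n m A c -> 0 <= Sig n m A c x.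
Proof. intros [cs [H1 H2]]. rewrite (Sig_ext n m A c (ssum m cs)) by auto. rewrite Sig_ssum.
 apply sumR_nonneg. intros k Hk. apply (H1 k Hk). Qed.

Lemma bzero n A (Ha1 : forall j, (j < n)%nat -> A j 0%nat = 0) x : sumR n (fun j => A j 0%nat * x j) = 0.
Proof. rewrite (sumR_ext n _ (fun _ => 0)). apply sumR_zero. intros j Hj. rewrite Ha1; auto; lra. Qed.

Lemma Sig_e1 n m A (Hm : (0 < m)%nat) (Ha1 : forall j, (j < n)%nat -> A j 0%nat = 0) x : Sig n m A e1 x = 1.
Proof. unfold Sig. rewrite (sumR_single m _ 0 Hm). unfold e1; simpl. rewrite bzero, exp_0 by auto. lra.
 intros i Hi Hi0. unfold e1. destruct (Nat.eqb_spec i 0); [lia|]. lra. Qed.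

Lemma SAGE_add_e1 n m A (Hm : (0 < m)%nat) (Ha1 : forall j, (j < n)%nat -> A j 0%nat = 0) c t :
  0 <= t -> C_SAGE n m A c -> C_SAGE n m A (fun i => c i + t * e1 i).
Proof. intros Ht [cs [H1 H2]].
 exists (fun k => if Nat.eqb k 0 then (fun i => cs k i + t * e1 i) else cs k). split.
 - intros k Hk. destruct (Nat.eqb_spec k 0). + subst. apply AGE_plus; auto. apply AGE_scal; auto. split.
   * intros x. rewrite Sig_e1; auto; lra. * intros i Hi Hi0. unfold e1. destruct (Nat.eqb_spec i 0); [lia|lra].
   + auto.
 - intros i Hi. rewrite (sumR_ext m _ (fun k => if Nat.eqb k 0 then cs k i + t * e1 i else cs k i)).
   rewrite sumR_modif by auto. rewrite H2; auto. intros k _. destruct (Nat.eqb k 0); auto. Qed.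

Lemma SAGE_zero n m A : C_SAGE n m A (fun _ => 0).
Proof. exists (fun _ _ => 0). split. intros k _. apply AGE_zero. intros i _. rewrite sumR_zero; auto. Qed.

Lemma SAGE_e1 n m A (Hm : (0 < m)%nat) (Ha1 : forall j, (j < n)%nat -> A j 0%nat = 0) : C_SAGE n m A e1.
Proof. apply (SAGE_ext n m A (fun i => 0 + 1 * e1 i)). intros; lra. apply SAGE_add_e1; auto; [lra|]. apply SAGE_zero. Qed.

Definition mom n A (x : nat -> R) (i : nat) : R := exp (sumR n (fun j => A j i * x j)).

Lemma dot_comm m u v : dot m u v = dot m v u.
Proof. unfold dot. apply sumR_ext; intros; lra. Qed.

Lemma dot_mom n m A c x : dot m c (mom n A x) = Sig n m A c x.
Proof. reflexivity. Qed.

Lemma dual_mom n m A x : dual_cone m (C_SAGE n m A) (mom n A x).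
Proof. intros k Hk. rewrite dot_comm, dot_mom. apply Sig_K; auto. Qed.

Lemma dot_lin m u w t v : dot m (fun i => u i + t * w i) v = dot m u v + t * dot m w v.
Proof. unfold dot. rewrite <- sumR_scal, <- sumR_plus. apply sumR_ext; intros; lra. Qed.

Lemma dot_e1 m v : (0 < m)%nat -> dot m v e1 = v 0%nat.
Proof. intros Hm. unfold dot. rewrite (sumR_single m _ 0 Hm). unfold e1; simpl; lra.
 intros i _ Hi. unfold e1. destruct (Nat.eqb_spec i 0); [lia|lra]. Qed.

Definition Dist (m : nat) (p : nat -> R) (cs : nat -> nat -> R) : R :=
  sumR m (fun i => (p i - ssum m cs i) * (p i - ssum m cs i)).

Lemma quad m u w t : sumR m (fun i => (u i + t * w i) * (u i + t * w i)) =
  sumR m (fun i => u i * u i) + 2 * t * sumR m (fun i => u i * w i) + t * t * sumR m (fun i => w i * w i).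
Proof. rewrite <- !sumR_scal, <- !sumR_plus. apply sumR_ext; intros; ring. Qed.

Lemma small_t a b : (forall t, 0 < t < 1 -> 0 <= 2 * a + t * b) -> 0 <= a.
Proof. intros H. destruct (Rle_lt_dec 0 a) as [|Ha]; auto.
 assert (Hb := Rabs_pos b). set (t := - a / (Rabs b - a + 1)).
 assert (Ht1 : 0 < t) by (unfold t; apply Rdiv_lt_0_compat; lra).
 assert (Ht2 : t * (Rabs b - a + 1) = - a) by (unfold t; field; lra).
 assert (Ht3 : t < 1) by nra.
 specialize (H t (conj Ht1 Ht3)). assert (t * b <= t * Rabs b) by (apply Rmult_le_compat_l; [lra| apply Rle_abs]).
 nra. Qed.

Lemma dot_ssum m v ks : dot m v (ssum m ks) = sumR m (fun k => dot m v (ks k)).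
Proof. unfold dot, ssum. rewrite (sumR_swap m m (fun k i => v i * ks k i)). apply sumR_ext. intros i _.
 rewrite <- sumR_scal. auto. Qed.

Lemma sumsq_zero m v : sumR m (fun i => v i * v i) <= 0 -> forall i, (i < m)%nat -> v i = 0.
Proof. intros H i Hi. assert (v i * v i <= sumR m (fun i => v i * v i)).
 apply (sumR_ge_term m (fun i => v i * v i)); auto. intros; nra. nra. Qed.

Lemma sep_from_min n m A p cs : Adm n m A cs -> (forall cs', Adm n m A cs' -> Dist m p cs <= Dist m p cs') ->
  ~ C_SAGE n m A p -> exists v, dual_cone m (C_SAGE n m A) v /\ dot m v p < 0.
Proof.
  intros Hadm Hmin Hnot. set (v := fun i => ssum m cs i - p i). exists v.
  assert (HD : Dist m p cs = sumR m (fun i => v i * v i)) by (unfold Dist, v; apply sumR_ext; intros; ring).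
  assert (Hage : forall k kap, (k < m)%nat -> C_AGE n m A k kap -> 0 <= dot m v kap).
  { intros k kap Hk Hkap. apply (small_t _ (sumR m (fun i => kap i * kap i))). intros t Ht.
    set (cs' := fun k' => if Nat.eqb k' k then (fun i => cs k' i + t * kap i) else cs k').
    assert (Hadm' : Adm n m A cs').
    { intros k' Hk'. unfold cs'. destruct (Nat.eqb_spec k' k). subst. apply AGE_plus; auto. apply AGE_scal; auto; lra. auto. }
    assert (Hss : forall i, ssum m cs' i = ssum m cs i + t * kap i).
    { intros i. unfold ssum, cs'. rewrite <- (sumR_modif m (fun k' => cs k' i) k (t * kap i)) by auto.
      apply sumR_ext. intros k' _. destruct (Nat.eqb k' k); auto. }
    specialize (Hmin cs' Hadm'). rewrite HD in Hmin. unfold Dist in Hmin.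
    rewrite (sumR_ext m (fun i => (p i - ssum m cs' i) * (p i - ssum m cs' i)) (fun i => (v i + t * kap i) * (v i + t * kap i))) in Hmin.
    2:{ intros i _. rewrite Hss. unfold v. ring. }
    rewrite quad in Hmin. unfold dot.
    assert (0 <= t * (2 * sumR m (fun i => v i * kap i) + t * sumR m (fun i => kap i * kap i))) by nra.
    apply (Rmult_le_reg_l t); lra. }
  split.
  - intros kap [ks [Hks1 Hks2]]. unfold dot. rewrite (sumR_ext m _ (fun i => v i * ssum m ks i)).
    2:{ intros i Hi. rewrite Hks2; auto. }
    fold (dot m v (ssum m ks)). rewrite dot_ssum. apply sumR_nonneg. intros k Hk. apply (Hage k); auto.
  - assert (Hq : 0 <= - dot m v (ssum m cs)).
    { apply (small_t _ (sumR m (fun i => ssum m cs i * ssum m cs i))). intros t Ht.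
      set (cs' := fun k i => (1 - t) * cs k i).
      assert (Hadm' : Adm n m A cs') by (intros k Hk; apply AGE_scal; auto; lra).
      specialize (Hmin cs' Hadm'). rewrite HD in Hmin. unfold Dist in Hmin.
      rewrite (sumR_ext m (fun i => (p i - ssum m cs' i) * (p i - ssum m cs' i)) (fun i => (v i + t * (- ssum m cs i)) * (v i + t * (- ssum m cs i)))) in Hmin.
      2:{ intros i _. unfold ssum, cs'. rewrite sumR_scal. unfold v, ssum. ring. }
      rewrite quad in Hmin.
      assert (Heq : sumR m (fun i => v i * - ssum m cs i) = - dot m v (ssum m cs)).
      { unfold dot. transitivity (sumR m (fun i => -1 * (v i * ssum m cs i))). apply sumR_ext; intros; ring. rewrite sumR_scal. ring. }
      assert (Heq2 : sumR m (fun i => - ssum m cs i * - ssum m cs i) = sumR m (fun i => ssum m cs i * ssum m cs i))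
        by (apply sumR_ext; intros; ring).
      rewrite Heq, Heq2 in Hmin.
      assert (0 <= t * (2 * - dot m v (ssum m cs) + t * sumR m (fun i => ssum m cs i * ssum m cs i))) by nra.
      apply (Rmult_le_reg_l t); lra. }
    assert (Hpos : 0 < sumR m (fun i => v i * v i)).
    { destruct (Rlt_le_dec 0 (sumR m (fun i => v i * v i))) as [|Hle]; auto. exfalso. apply Hnot.
      apply (SAGE_ext n m A (ssum m cs)). intros i Hi. assert (v i = 0) by (apply (sumsq_zero m v); auto).
      unfold v in *; lra. apply SAGE_Adm; auto. }
    assert (dot m v p = dot m v (ssum m cs) - sumR m (fun i => v i * v i)).
    { unfold dot. transitivity (sumR m (fun i => v i * ssum m cs i + -1 * (v i * v i))). apply sumR_ext. intros; unfold v; ring. rewrite sumR_plus, sumR_scal. ring. }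
    lra.
Qed.

Definition bb n (A : nat -> nat -> R) l (y : nat -> R) := sumR n (fun j => A j l * y j).

Lemma Ychoice n m A (Hdist : distinct_columns n m A) :
  exists Y : nat -> nat -> nat -> R, forall i k, (i < m)%nat -> (k < m)%nat -> i <> k ->
    bb n A i (Y i k) - bb n A k (Y i k) = INR (S m).
Proof.
  assert (H : forall i k, exists y : nat -> R, (i < m)%nat -> (k < m)%nat -> i <> k ->
      bb n A i y - bb n A k y = INR (S m)).
  { intros i k. destruct (classic ((i < m)%nat /\ (k < m)%nat /\ i <> k)) as [[H1 [H2 H3]]|Hn].
    - destruct (Hdist i k H1 H2 H3) as [j [Hj Hd]].
      exists (fun j' => if Nat.eqb j' j then INR (S m) / (A j i - A j k) else 0). intros _ _ _.
      unfold bb. transitivity (sumR n (fun j' => (A j' i - A j' k) * (if Nat.eqb j' j then INR (S m) / (A j i - A j k) else 0))).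
      + transitivity (sumR n (fun j' => A j' i * (if Nat.eqb j' j then INR (S m) / (A j i - A j k) else 0) + -1 * (A j' k * (if Nat.eqb j' j then INR (S m) / (A j i - A j k) else 0)))).
        * rewrite sumR_plus, sumR_scal. ring.
        * apply sumR_ext; intros; ring.
      + rewrite (sumR_single n _ j Hj). rewrite Nat.eqb_refl. field. intros H; apply Hd; lra.
        intros j' _ Hj'. destruct (Nat.eqb_spec j' j); [lia|ring].
    - exists (fun _ => 0). intros H1 H2 H3. exfalso; auto. }
  exists (fun i k => proj1_sig (constructive_indefinite_description _ (H i k))).
  intros i k. destruct (constructive_indefinite_description _ (H i k)); simpl; auto.
Qed.

Definition W n m A (Y : nat -> nat -> nat -> R) (kap : nat -> R) : R :=
  sumR m (fun k => sumR m (fun i => exp (- bb n A k (Y i k)) * Sig n m A kap (Y i k))).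

Definition Pk m k (kap : nat -> R) := sumR m (fun i => if Nat.eqb i k then 0 else kap i).

Lemma AGE_other n m A k kap i : C_AGE n m A k kap -> (i < m)%nat -> i <> k -> 0 <= kap i.
Proof. intros [_ H] Hi Hik. apply H; auto. Qed.

Lemma Pk_nonneg n m A k kap : C_AGE n m A k kap -> 0 <= Pk m k kap.
Proof. intros H. apply sumR_nonneg. intros i Hi. destruct (Nat.eqb_spec i k). lra. apply (AGE_other n m A k); auto. Qed.

Lemma AGE_sum0 n m A k kap : (k < m)%nat -> C_AGE n m A k kap -> 0 <= kap k + Pk m k kap.
Proof. intros Hk H. destruct H as [H1 H2]. specialize (H1 (fun _ => 0)). unfold Sig in H1.
 rewrite (sumR_ext m _ kap) in H1. rewrite (sumR_split m kap k Hk) in H1. unfold Pk. lra.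
 intros i _. rewrite (sumR_ext n _ (fun _ => 0)). rewrite sumR_zero, exp_0. ring. intros; ring. Qed.

Lemma W_lower n m A Y k kap :
  (forall i k, (i < m)%nat -> (k < m)%nat -> i <> k -> bb n A i (Y i k) - bb n A k (Y i k) = INR (S m)) ->
  (k < m)%nat -> C_AGE n m A k kap -> Pk m k kap <= W n m A Y kap.
Proof.
  intros HY Hk Hkap.
  assert (Hnn : forall k' i, 0 <= exp (- bb n A k' (Y i k')) * Sig n m A kap (Y i k')).
  { intros k' i. apply Rmult_le_pos. apply Rlt_le, exp_pos. apply Hkap. }
  assert (H1 : sumR m (fun i => exp (- bb n A k (Y i k)) * Sig n m A kap (Y i k)) <= W n m A Y kap).
  { unfold W. apply (sumR_ge_term m (fun k' => sumR m (fun i => exp (- bb n A k' (Y i k')) * Sig n m A kap (Y i k')))); auto.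
    intros; apply sumR_nonneg; auto. }
  assert (H2 : forall i, (i < m)%nat -> kap k + INR (S m) * (if Nat.eqb i k then 0 else kap i) <=
                 exp (- bb n A k (Y i k)) * Sig n m A kap (Y i k)).
  { intros i Hi. set (y := Y i k).
    assert (Heq : exp (- bb n A k y) * Sig n m A kap y = sumR m (fun l => kap l * exp (bb n A l y - bb n A k y))).
    { unfold Sig. rewrite <- sumR_scal. apply sumR_ext. intros l _. unfold Rminus. rewrite exp_plus. unfold bb. ring. }
    rewrite Heq. rewrite (sumR_split m _ k Hk). rewrite Rminus_diag, exp_0, Rmult_1_r.
    assert (Hrest : forall l, (l < m)%nat -> 0 <= (if Nat.eqb l k then 0 else kap l * exp (bb n A l y - bb n A k y))).
    { intros l Hl. destruct (Nat.eqb_spec l k). lra. apply Rmult_le_pos. apply (AGE_other n m A k); auto. apply Rlt_le, exp_pos. }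
    destruct (Nat.eqb_spec i k).
    - assert (0 <= sumR m (fun l => if Nat.eqb l k then 0 else kap l * exp (bb n A l y - bb n A k y))) by (apply sumR_nonneg; auto). lra.
    - assert (Ht := sumR_ge_term m _ i Hrest Hi). simpl in Ht. destruct (Nat.eqb_spec i k); [lia|].
      unfold y in Ht. rewrite (HY i k Hi Hk n0) in Ht.
      assert (He : INR (S m) < exp (INR (S m))).
      { assert (1 + INR (S m) < exp (INR (S m))) by (apply exp_ineq1; apply not_0_INR; lia). lra. }
      assert (0 <= kap i) by (apply (AGE_other n m A k); auto).
      unfold y. nra. }
  assert (H3 : sumR m (fun i => kap k + INR (S m) * (if Nat.eqb i k then 0 else kap i)) <=
               sumR m (fun i => exp (- bb n A k (Y i k)) * Sig n m A kap (Y i k))) by (apply sumR_le; auto).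
  rewrite sumR_plus, sumR_const, sumR_scal in H3. fold (Pk m k kap) in H3.
  assert (H4 := AGE_sum0 n m A k kap Hk Hkap). rewrite S_INR in H3. assert (0 <= INR m) by apply pos_INR.
  assert (H5 := Pk_nonneg n m A k kap Hkap). nra.
Qed.

Lemma W_ssum n m A Y cs : W n m A Y (ssum m cs) = sumR m (fun k => W n m A Y (cs k)).
Proof. unfold W.
 rewrite (sumR_ext m _ (fun k' => sumR m (fun k => sumR m (fun i => exp (- bb n A k' (Y i k')) * Sig n m A (cs k) (Y i k'))))).
 - apply (sumR_swap m m (fun k' k => sumR m (fun i => exp (- bb n A k' (Y i k')) * Sig n m A (cs k) (Y i k')))).
 - intros k' _. rewrite <- (sumR_swap m m (fun i k => exp (- bb n A k' (Y i k')) * Sig n m A (cs k) (Y i k'))).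
   apply sumR_ext. intros i _. rewrite Sig_ssum, sumR_scal. auto. Qed.

Lemma W_mono n m A Y s S : (forall i, (i < m)%nat -> s i <= S) -> W n m A Y s <= W n m A Y (fun _ => S).
Proof. intros H. unfold W. apply sumR_le. intros k _. apply sumR_le. intros i _. apply Rmult_le_compat_l.
 apply Rlt_le, exp_pos. unfold Sig. apply sumR_le. intros l Hl. apply Rmult_le_compat_r. apply Rlt_le, exp_pos. auto. Qed.

Lemma sq_bound x Rb : x * x <= Rb -> Rabs x <= 1 + Rabs Rb.
Proof. unfold Rabs. destruct (Rcase_abs x); destruct (Rcase_abs Rb); intros; nra. Qed.

Lemma bound_lemma n m A Y p Rb :
  (forall i k, (i < m)%nat -> (k < m)%nat -> i <> k -> bb n A i (Y i k) - bb n A k (Y i k) = INR (S m)) ->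
  exists B, forall cs, Adm n m A cs -> Dist m p cs <= Rb ->
    forall k i, (k < m)%nat -> (i < m)%nat -> Rabs (cs k i) <= B.
Proof.
  intros HY. set (Sb := sumR m (fun i => Rabs (p i)) + 1 + Rabs Rb).
  set (C := W n m A Y (fun _ => Sb)). exists (C + Sb). intros cs Hadm HD k i Hk Hi.
  assert (HS0 : 0 <= Sb) by (unfold Sb; assert (0 <= sumR m (fun i => Rabs (p i))) by (apply sumR_nonneg; intros; apply Rabs_pos); assert (0 <= Rabs Rb) by apply Rabs_pos; lra).
  assert (Hs : forall i, (i < m)%nat -> ssum m cs i <= Sb).
  { intros i0 Hi0. assert ((p i0 - ssum m cs i0) * (p i0 - ssum m cs i0) <= Rb).
    { eapply Rle_trans; [|apply HD]. unfold Dist. apply (sumR_ge_term m (fun i => (p i - ssum m cs i) * (p i - ssum m cs i))); auto.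
      intros; apply Rle_0_sqr. }
    apply sq_bound in H. assert (Rabs (p i0) <= sumR m (fun i => Rabs (p i))) by (apply (sumR_ge_term m (fun i => Rabs (p i))); auto; intros; apply Rabs_pos).
    unfold Sb. apply abs_le_inv in H. assert (Hp := Rle_abs (p i0)). lra. }
  assert (HW : forall k, (k < m)%nat -> Pk m k (cs k) <= C).
  { intros k0 Hk0. apply (Rle_trans _ (W n m A Y (cs k0))). apply W_lower; auto.
    apply (Rle_trans _ (W n m A Y (ssum m cs))). rewrite W_ssum.
    apply (sumR_ge_term m (fun k => W n m A Y (cs k))); auto. intros k1 Hk1.
    apply (Rle_trans _ (Pk m k1 (cs k1))). apply (Pk_nonneg n m A); auto. apply W_lower; auto.
    apply W_mono; auto. }
  specialize (HW k Hk). assert (HP := Pk_nonneg n m A k (cs k) (Hadm k Hk)).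
  destruct (Nat.eq_dec i k).
  - subst i. assert (H1 := AGE_sum0 n m A k (cs k) Hk (Hadm k Hk)).
    assert (H2 : cs k k <= ssum m cs k).
    { unfold ssum. rewrite (sumR_split m (fun k' => cs k' k) k Hk).
      assert (0 <= sumR m (fun k' => if Nat.eqb k' k then 0 else cs k' k)); [|lra].
      apply sumR_nonneg. intros k' Hk'. destruct (Nat.eqb_spec k' k). lra. apply (AGE_other n m A k'); auto. }
    assert (H3 := Hs k Hk). apply Rabs_le. lra.
  - assert (H0 : 0 <= cs k i) by (apply (AGE_other n m A k); auto).
    assert (H1 : cs k i <= Pk m k (cs k)).
    { unfold Pk. assert (Ht := sumR_ge_term m (fun i0 => if Nat.eqb i0 k then 0 else cs k i0) i).
      simpl in Ht. destruct (Nat.eqb_spec i k); [lia|]. apply Ht; auto. intros i0 Hi0.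
      destruct (Nat.eqb_spec i0 k). lra. apply (AGE_other n m A k); auto. }
    rewrite Rabs_right by lra. lra.
Qed.

Lemma Dist_nonneg m p cs : 0 <= Dist m p cs.
Proof. apply sumR_nonneg. intros; apply Rle_0_sqr. Qed.

Lemma inv_S_le1 j : / INR (S j) <= 1.
Proof. rewrite <- Rinv_1. apply Rinv_le_contravar. lra. rewrite S_INR. assert (0 <= INR j) by apply pos_INR. lra. Qed.

Lemma cv_invS : Un_cv (fun l => / INR (S l)) 0.
Proof. assert (H := RinvN_cv). intros e He. destruct (H e He) as [N HN]. exists N. intros n0 Hn.
 specialize (HN n0 Hn). simpl in HN. rewrite S_INR. exact HN. Qed.

Lemma minimizer n m A p (Hdist : distinct_columns n m A) :
  exists cs, Adm n m A cs /\ forall cs', Adm n m A cs' -> Dist m p cs <= Dist m p cs'.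
Proof.
  set (E := fun r => exists cs, Adm n m A cs /\ r = - Dist m p cs).
  assert (Hz : Adm n m A (fun _ _ => 0)) by (intros k _; apply AGE_zero).
  destruct (completeness E) as [M [HM1 HM2]].
  { exists 0. intros r [cs [_ ->]]. assert (H := Dist_nonneg m p cs). lra. }
  { exists (- Dist m p (fun _ _ => 0)). exists (fun _ _ => 0). auto. }
  set (d := - M).
  assert (Hinf : forall cs, Adm n m A cs -> d <= Dist m p cs).
  { intros cs Hcs. assert (- Dist m p cs <= M) by (apply HM1; exists cs; auto). unfold d; lra. }
  assert (Happ : forall j : nat, exists cs, Adm n m A cs /\ Dist m p cs < d + / INR (S j)).
  { intros j. apply NNPP. intros Hn. assert (Hp : 0 < / INR (S j)) by (apply Rinv_0_lt_compat, lt_0_INR; lia).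
    assert (M <= M - / INR (S j)); [|lra]. apply HM2. intros r [cs [Hcs ->]].
    destruct (Rlt_le_dec (Dist m p cs) (d + / INR (S j))) as [Hl|Hl].
    - exfalso; apply Hn; exists cs; auto.
    - unfold d in Hl. lra. }
  set (CS := fun j => proj1_sig (constructive_indefinite_description _ (Happ j))).
  assert (HCS : forall j, Adm n m A (CS j) /\ Dist m p (CS j) < d + / INR (S j)).
  { intros j. unfold CS. destruct (constructive_indefinite_description _ (Happ j)); simpl; auto. }
  destruct (Ychoice n m A Hdist) as [Y HY].
  destruct (bound_lemma n m A Y p (Dist m p (fun _ _ => 0) + 1) HY) as [B HB].
  assert (HB' : forall j k i, (k < m)%nat -> (i < m)%nat -> Rabs (CS j k i) <= B).
  { intros j k i Hk Hi. apply HB; auto. apply HCS. destruct (HCS j) as [_ H1]. assert (H2 := inv_S_le1 j).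
    assert (H3 := Hinf (fun _ _ => 0) Hz). lra. }
  destruct (BWlist (nat * nat) (list_prod (seq 0 m) (seq 0 m)) (fun l t => CS l (fst t) (snd t)) B) as [psi [Hpsi Hlim]].
  { intros l [k i] Ht. apply in_prod_iff in Ht. destruct Ht as [Hk Hi]. apply in_seq in Hk, Hi. simpl. apply HB'; lia. }
  assert (Hlim2 : forall k i, exists lim, (k < m)%nat -> (i < m)%nat -> Un_cv (fun l => CS (psi l) k i) lim).
  { intros k i. destruct (classic ((k < m)%nat /\ (i < m)%nat)) as [[Hk Hi]|Hn].
    - destruct (Hlim (k, i)) as [lim Hl]. apply in_prod_iff; split; apply in_seq; lia. exists lim. auto.
    - exists 0. intros; exfalso; auto. }
  set (cst := fun k i => proj1_sig (constructive_indefinite_description _ (Hlim2 k i))).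
  assert (Hcst : forall k i, (k < m)%nat -> (i < m)%nat -> Un_cv (fun l => CS (psi l) k i) (cst k i)).
  { intros k i. unfold cst. destruct (constructive_indefinite_description _ (Hlim2 k i)); simpl; auto. }
  assert (Hadm : Adm n m A cst).
  { intros k Hk. split.
    - intros x. apply (@Rle_cv_lim (fun _ => 0) (fun l => Sig n m A (CS (psi l) k) x)).
      + intros l. destruct (HCS (psi l)) as [Ha _]. apply (Ha k Hk).
      + apply CV_const.
      + unfold Sig. apply sumR_cv. intros i Hi. apply CV_mult. apply Hcst; auto. apply CV_const.
    - intros i Hi Hik. apply (@Rle_cv_lim (fun _ => 0) (fun l => CS (psi l) k i)).
      + intros l. destruct (HCS (psi l)) as [Ha _]. apply (proj2 (Ha k Hk)); auto.
      + apply CV_const.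
      + apply Hcst; auto. }
  assert (Hd : Dist m p cst <= d).
  { apply (@Rle_cv_lim (fun l => Dist m p (CS (psi l))) (fun l => d + / INR (S l))).
    - intros l. destruct (HCS (psi l)) as [_ H1]. assert (/ INR (S (psi l)) <= / INR (S l)).
      { apply Rinv_le_contravar. apply lt_0_INR; lia. apply le_INR. assert (l <= psi l)%nat by (apply SI_ge; auto). lia. }
      lra.
    - unfold Dist. apply sumR_cv. intros i Hi. unfold ssum.
      assert (Hc : Un_cv (fun l => p i - sumR m (fun k => CS (psi l) k i)) (p i - sumR m (fun k => cst k i))).
      { apply CV_minus. apply CV_const. apply (sumR_cv m (fun l k => CS (psi l) k i)). intros k Hk. apply Hcst; auto. }
      apply (CV_mult _ _ _ _ Hc Hc).
    - assert (Hc := CV_plus (fun _ => d) _ d 0 (CV_const d) cv_invS). rewrite Rplus_0_r in Hc. exact Hc. }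
  exists cst. split; auto. intros cs' Hcs'. specialize (Hinf cs' Hcs'). lra.
Qed.

Lemma separation n m A p (Hdist : distinct_columns n m A) :
  ~ C_SAGE n m A p -> exists v, dual_cone m (C_SAGE n m A) v /\ dot m v p < 0.
Proof. intros Hn. destruct (minimizer n m A p Hdist) as [cs [H1 H2]]. apply (sep_from_min n m A p cs); auto. Qed.

Lemma dot_shift m v c g : (0 < m)%nat -> dot m v (fun i => c i - g * e1 i) = dot m c v - g * v 0%nat.
Proof. intros Hm. unfold dot. transitivity (sumR m (fun i => c i * v i + (- g) * (v i * e1 i))).
 apply sumR_ext; intros; ring. rewrite sumR_plus, sumR_scal. fold (dot m v e1). rewrite dot_e1; auto. ring. Qed.

Lemma dot_scal_l m t v w : dot m (fun i => t * v i) w = t * dot m v w.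
Proof. unfold dot. rewrite <- sumR_scal. apply sumR_ext; intros; ring. Qed.

Theorem mainTheorem1 (n m : nat) (A : nat -> nat -> R) (c : nat -> R)
  (Hm : (0 < m)%nat)
  (Hdist : distinct_columns n m A)
  (Ha1 : forall j, (j < n)%nat -> A j 0%nat = 0) :
  exists s : ER,
    is_esup (fun gamma => C_SAGE n m A (fun i => c i - gamma * e1 i)) s /\
    is_einf (fun t => exists v : nat -> R,
                 dual_cone m (C_SAGE n m A) v /\ v 0%nat = 1 /\ t = dot m c v) s.
Proof.
  set (Gam := fun gamma => C_SAGE n m A (fun i => c i - gamma * e1 i)).
  set (Dual := fun t => exists v : nat -> R, dual_cone m (C_SAGE n m A) v /\ v 0%nat = 1 /\ t = dot m c v).
  assert (Hweak : forall g t, Gam g -> Dual t -> g <= t).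
  { intros g t Hg [v [Hv [Hv0 ->]]]. specialize (Hv _ Hg). rewrite dot_shift in Hv by auto. rewrite Hv0 in Hv. lra. }
  set (mom0 := mom n A (fun _ => 0)).
  assert (Hmom0 : mom0 0%nat = 1) by (unfold mom0, mom; rewrite bzero by auto; apply exp_0).
  set (t0 := dot m c mom0).
  assert (Ht0 : Dual t0) by (exists mom0; split; [apply dual_mom| auto]).
  assert (Hkey : forall g, ~ Gam g -> forall b, g < b -> exists t, Dual t /\ t < b).
  { intros g Hg b Hgb. destruct (separation n m A _ Hdist Hg) as [v [Hv Hvp]].
    rewrite dot_shift in Hvp by auto.
    assert (Hv0 : 0 <= v 0%nat) by (rewrite <- (dot_e1 m v Hm); apply Hv; apply SAGE_e1; auto).
    destruct (Rle_lt_dec (v 0%nat) 0) as [Hz|Hp].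
    - assert (Hz' : v 0%nat = 0) by lra. rewrite Hz' in Hvp.
      set (a := t0). set (e := dot m c v).
      set (lam := (Rabs (a - b) + 1) / (- e)).
      assert (Hlam : lam * e = - (Rabs (a - b) + 1)) by (unfold lam; field; unfold e; lra).
      assert (Hlam0 : 0 <= lam) by (unfold lam; apply Rlt_le, Rdiv_lt_0_compat; [assert (0 <= Rabs (a - b)) by apply Rabs_pos; lra| unfold e; lra]).
      exists (dot m c (fun i => mom0 i + lam * v i)). split.
      + exists (fun i => mom0 i + lam * v i). split; [|split; auto].
        * intros kap Hk. rewrite dot_lin. assert (H1 := dual_mom n m A (fun _ => 0) kap Hk). assert (H2 := Hv kap Hk).
          fold mom0 in H1. nra.
        * rewrite Hmom0, Hz'. ring.
      + rewrite dot_comm, dot_lin, (dot_comm m v c), (dot_comm m mom0 c). fold e. fold t0. fold a.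
        assert (Hab := Rle_abs (a - b)). lra.
    - exists (dot m c (fun i => / v 0%nat * v i)). split.
      + exists (fun i => / v 0%nat * v i). split; [|split; auto].
        * intros kap Hk. rewrite dot_scal_l. apply Rmult_le_pos. apply Rlt_le, Rinv_0_lt_compat; auto. apply Hv; auto.
        * field. lra.
      + rewrite dot_comm, dot_scal_l, dot_comm.
        apply (Rmult_lt_reg_l (v 0%nat)); auto. rewrite <- Rmult_assoc, Rinv_r by lra. nra. }
  destruct (classic (exists g, Gam g)) as [Hne|Hemp].
  - destruct (completeness Gam) as [sig [HM1 HM2]].
    { exists t0. intros x Hx. apply Hweak; auto. }
    { auto. }
    exists (Fin sig). split.
    + split.
      * intros x Hx. simpl. apply HM1. exact Hx.
      * intros [b| |] Hu; simpl.
        -- apply HM2. intros x Hx. exact (Hu x Hx).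
        -- exact I.
        -- destruct Hne as [x0 Hx0]. exact (Hu x0 Hx0).
    + split.
      * intros t Ht. simpl. apply HM2. intros x Hx. apply Hweak; auto.
      * intros [b| |] Hu; simpl.
        -- destruct (Rle_lt_dec b sig) as [|Hlt]; auto. exfalso.
           assert (Hng : ~ Gam ((sig + b) / 2)).
           { intros Hg. assert ((sig + b) / 2 <= sig) by (apply HM1; exact Hg). lra. }
           destruct (Hkey _ Hng b ltac:(lra)) as [t [Ht Htb]]. specialize (Hu t Ht). simpl in Hu. lra.
        -- exact (Hu t0 Ht0).
        -- exact I.
  - exists MInf. split.
    + split.
      * intros x Hx. exfalso. apply Hemp. exists x; exact Hx.
      * intros u _. simpl. auto.
    + split.
      * intros t _. simpl. auto.
      * intros [b| |] Hu; simpl.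
        -- assert (Hng : ~ Gam (b - 1)) by (intros Hg; apply Hemp; exists (b - 1); exact Hg).
           destruct (Hkey _ Hng b ltac:(lra)) as [t [Ht Htb]]. specialize (Hu t Ht). simpl in Hu. lra.
        -- exact (Hu t0 Ht0).
        -- exact I.
Qed.
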